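(* Let $\langle X, d\rangle$ be a metric space. The following conditions are equivalent: (1) $X$ is cofinally Bourbaki quasi-complete; (2) $X$ is strongly uniformly locally bounded and, for every metric space $\langle Y,\rho\rangle$, every locally Lipschitz function $f: X\to Y$ is strongly uniformly locally Lipschitz; (3) $X$ is strongly uniformly locally bounded and every real-valued locally Lipschitz function on $X$ is strongly uniformly locally Lipschitz; (4) $X$ is strongly uniformly locally bounded and the real-valued strongly uniformly locally Lipschitz functions on $X$ are uniformly dense in $C(X,\mathbb{R})$, the set of all real-valued continuous functions on $X$.
   Context: For $\varepsilon>0$ and $x,y\in X$, an $\varepsilon$-chain from $x$ to $y$ is a finite sequence $x=x_0,x_1,\dots,x_n=y$ in $X$ with $d(x_{i-1},x_i)<\varepsilon$ for all $i$. The $\varepsilon$-chainable component $S^\infty_d(x,\varepsilon)$ is the set of all $y\in X$ that can be joined to $x$ by an $\varepsilon$-chain. A sequence $\langle x_n\rangle$ in $X$ is cofinally Bourbaki quasi-Cauchy if for every $\varepsilon>0$ there is an infinite set $N_\varepsilon\subseteq\mathbb{N}$ such that for all $j,k\in N_\varepsilon$, $x_j$ and $x_k$ can be joined by an $\varepsilon$-chain. $X$ is cofinally Bourbaki quasi-complete if every cofinally Bourbaki quasi-Cauchy sequence in $X$ has a cluster point. $X$ is strongly uniformly locally bounded if there is $\delta>0$ such that $S^\infty_d(x,\delta)$ is a bounded subset of $X$ for every $x\in X$. A function $f:X\to Y$ into a metric space $\langle Y,\rho\rangle$ is locally Lipschitz if each $x\in X$ has a ball $S_d(x,\delta_x)$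 on which $f$ is Lipschitz; $f$ is strongly uniformly locally Lipschitz (also called uniformly locally chain-Lipschitz) if there exists $\delta>0$ such that for each $x\in X$ the restriction of $f$ to $S^\infty_d(x,\delta)$ is Lipschitz (the Lipschitz constant may depend on $x$). Uniform density means density with respect to uniform (sup-norm) convergence. *)

(* Defs.v *)
From Stdlib Require Import Reals Lra.
Open Scope R_scope.

Definition is_metric {X : Type} (d : X -> X -> R) : Prop :=
  (forall x y, 0 <= d x y) /\
  (forall x y, d x y = 0 <-> x = y) /\
  (forall x y, d x y = d y x) /\
  (forall x y z, d x z <= d x y + d y z).

Definition Rmetric (a b : R) : R := Rabs (a - b).

Definition eps_chain {X : Type} (d : X -> X -> R) (eps : R) (x y : X) : Prop :=
  exists (n : nat) (s : nat -> X),
    s 0%nat = x /\ s n = y /\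
    (forall i : nat, (i < n)%nat -> d (s i) (s (S i)) < eps).

Definition chain_comp {X : Type} (d : X -> X -> R) (x : X) (eps : R) : X -> Prop :=
  fun y => eps_chain d eps x y.

Definition ball_d {X : Type} (d : X -> X -> R) (x : X) (delta : R) : X -> Prop :=
  fun y => d x y < delta.

Definition bounded_set {X : Type} (d : X -> X -> R) (A : X -> Prop) : Prop :=
  exists M : R, forall a b, A a -> A b -> d a b <= M.

Definition infinite_nat_set (N : nat -> Prop) : Prop :=
  forall m : nat, exists n : nat, (m <= n)%nat /\ N n.

Definition cofinally_BQC_seq {X : Type} (d : X -> X -> R) (x : nat -> X) : Prop :=
  forall eps : R, 0 < eps ->
    exists N : nat -> Prop, infinite_nat_set N /\
      forall j k : nat, N j -> N k -> eps_chain d eps (x j) (x k).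

Definition cluster_point {X : Type} (d : X -> X -> R) (x : nat -> X) (p : X) : Prop :=
  forall eps : R, 0 < eps -> forall m : nat, exists n : nat, (m <= n)%nat /\ d (x n) p < eps.

Definition cofinally_BQ_complete {X : Type} (d : X -> X -> R) : Prop :=
  forall x : nat -> X, cofinally_BQC_seq d x -> exists p : X, cluster_point d x p.

Definition strongly_unif_loc_bounded {X : Type} (d : X -> X -> R) : Prop :=
  exists delta : R, 0 < delta /\ forall x : X, bounded_set d (chain_comp d x delta).

Definition lipschitz_on {X Y : Type} (d : X -> X -> R) (rho : Y -> Y -> R)
  (f : X -> Y) (A : X -> Prop) : Prop :=
  exists K : R, 0 <= K /\ forall a b, A a -> A b -> rho (f a) (f b) <= K * d a b.

Definition locally_lipschitz {X Y : Type} (d : X -> X -> R) (rho : Y -> Y -> R)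
  (f : X -> Y) : Prop :=
  forall x : X, exists delta : R, 0 < delta /\ lipschitz_on d rho f (ball_d d x delta).

Definition strongly_unif_loc_lipschitz {X Y : Type} (d : X -> X -> R) (rho : Y -> Y -> R)
  (f : X -> Y) : Prop :=
  exists delta : R, 0 < delta /\ forall x : X, lipschitz_on d rho f (chain_comp d x delta).

Definition continuous_d {X : Type} (d : X -> X -> R) (f : X -> R) : Prop :=
  forall x : X, forall eps : R, 0 < eps ->
    exists delta : R, 0 < delta /\ forall y : X, d x y < delta -> Rabs (f y - f x) < eps.

Definition SULL_uniformly_dense {X : Type} (d : X -> X -> R) : Prop :=
  forall f : X -> R, continuous_d d f ->
    forall eps : R, 0 < eps ->
      exists g : X -> R, strongly_unif_loc_lipschitz d Rmetric g /\
        forall x : X, Rabs (f x - g x) < eps.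

(* Main.v *)
Require Import Defs.
From Stdlib Require Import Reals Lra Lia ZArith Classical ClassicalEpsilon Cantor.
Open Scope R_scope.

Section Basics.
Context {X : Type} (d : X -> X -> R) (hd : is_metric d).

Lemma d_nonneg x y : 0 <= d x y. Proof. apply (proj1 hd). Qed.
Lemma d_refl x : d x x = 0. Proof. apply (proj1 (proj2 hd)). reflexivity. Qed.
Lemma d_sym x y : d x y = d y x. Proof. apply (proj1 (proj2 (proj2 hd))). Qed.
Lemma d_tri x y z : d x z <= d x y + d y z. Proof. apply (proj2 (proj2 (proj2 hd))). Qed.

Lemma chain_refl e x : eps_chain d e x x.
Proof. exists 0%nat, (fun _ => x). repeat split; intros; lia. Qed.

Lemma chain_mono e e' x y : e <= e' -> eps_chain d e x y -> eps_chain d e' x y.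
Proof.
  intros He [n [s [H0 [H1 H2]]]]. exists n, s. repeat split; auto.
  intros i Hi. specialize (H2 i Hi). lra.
Qed.

Lemma chain_trans e x y z : eps_chain d e x y -> eps_chain d e y z -> eps_chain d e x z.
Proof.
  intros [n [s [H0 [H1 H2]]]] [m [t [T0 [T1 T2]]]].
  exists (n + m)%nat, (fun i => if Nat.leb i n then s i else t (i - n)%nat).
  repeat split.
  - simpl. auto.
  - destruct (Nat.leb (n+m) n) eqn:E.
    + apply Nat.leb_le in E. assert (m = 0%nat) by lia. subst m.
      rewrite Nat.add_0_r. rewrite H1. rewrite <- T1. rewrite T0. reflexivity.
    + replace (n + m - n)%nat with m by lia. auto.
  - intros i Hi.
    destruct (Nat.leb i n) eqn:E1; destruct (Nat.leb (S i) n) eqn:E2.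
    + apply Nat.leb_le in E2. apply H2. lia.
    + apply Nat.leb_le in E1. apply Nat.leb_gt in E2. assert (i = n) by lia. subst i.
      replace (S n - n)%nat with 1%nat by lia. rewrite H1. rewrite <- T0.
      apply T2. lia.
    + apply Nat.leb_gt in E1. apply Nat.leb_le in E2. lia.
    + apply Nat.leb_gt in E1. replace (S i - n)%nat with (S (i - n)) by lia.
      apply T2. lia.
Qed.

Lemma chain_sym e x y : eps_chain d e x y -> eps_chain d e y x.
Proof.
  intros [n [s [H0 [H1 H2]]]].
  exists n, (fun i => s (n - i)%nat). repeat split.
  - rewrite Nat.sub_0_r. auto.
  - rewrite Nat.sub_diag. auto.
  - intros i Hi. rewrite d_sym. replace (n - i)%nat with (S (n - S i)) by lia.
    apply H2. lia.
Qed.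

End Basics.

Lemma nat_gt (r : R) : exists n : nat, r < INR n.
Proof.
  destruct (archimed r) as [H1 H2].
  destruct (Z_le_gt_dec (up r) 0) as [Hz|Hz].
  - exists 0%nat. simpl. apply IZR_le in Hz. lra.
  - exists (Z.to_nat (up r)). rewrite INR_IZR_INZ. rewrite Z2Nat.id by lia. lra.
Qed.

Lemma inv_small (e : R) : 0 < e -> exists n : nat, / (INR n + 1) < e.
Proof.
  intros He. destruct (nat_gt (/ e)) as [n Hn]. exists n.
  assert (0 < INR n + 1) by (pose proof (pos_INR n); lra).
  assert (0 < / e) by (apply Rinv_0_lt_compat; lra).
  rewrite <- (Rinv_inv e).
  apply Rinv_lt_contravar. apply Rmult_lt_0_compat; lra. lra.
Qed.

Lemma merged {X : Type} (d : X -> X -> R) (hd : is_metric d) :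
  cofinally_BQ_complete d ->
  forall (y : nat -> X) (Cert : X -> nat -> Prop),
  (forall n L, exists z, eps_chain d (/ (INR n + 1)) (y n) z /\ Cert z L) ->
  (forall p, exists L0 r, 0 < r /\ forall z L, (L0 <= L)%nat -> d z p < r -> ~ Cert z L) ->
  False.
Proof.
  intros HP y Cert Hz Hdef.
  destruct (choice (fun nL (z : X) => eps_chain d (/ (INR (fst nL) + 1)) (y (fst nL)) z /\ Cert z (snd nL)))
    as [zf Hzf].
  { intros [n L]. apply Hz. }
  set (x := fun k : nat => zf (fst (of_nat k), k)).
  destruct (HP x) as [p Hp].
  - intros e He. destruct (inv_small e He) as [n Hn].
    exists (fun k => fst (of_nat k) = n). split.
    + intros m. exists (to_nat (n, m)). split.
      * pose proof (to_nat_non_decreasing n m). lia.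
      * rewrite cancel_of_to. reflexivity.
    + intros j k Hj Hk.
      destruct (Hzf (fst (of_nat j), j)) as [Cj _].
      destruct (Hzf (fst (of_nat k), k)) as [Ck _].
      simpl in Cj, Ck. rewrite Hj in Cj. rewrite Hk in Ck.
      apply chain_mono with (/ (INR n + 1)); [lra|].
      unfold x; rewrite Hj, Hk.
      apply chain_trans with (y n); [apply chain_sym|]; auto.
  - destruct (Hdef p) as [L0 [r [Hr HL]]].
    destruct (Hp r Hr L0) as [j [Hj Hdj]].
    destruct (Hzf (fst (of_nat j), j)) as [_ Cj].
    apply (HL (x j) j Hj Hdj). exact Cj.
Qed.

Lemma P1_SULB {X : Type} (d : X -> X -> R) (hd : is_metric d) :
  cofinally_BQ_complete d -> strongly_unif_loc_bounded d.
Proof.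
  intros HP. apply NNPP. intros Hn.
  assert (Hy : forall n : nat, exists y, ~ bounded_set d (chain_comp d y (/ (INR n + 1)))).
  { intros n. apply not_all_ex_not. intros Hall. apply Hn.
    exists (/ (INR n + 1)). split; auto.
    apply Rinv_0_lt_compat. pose proof (pos_INR n). lra. }
  destruct (choice _ Hy) as [y Hy'].
  apply (merged d hd HP y (fun z L => INR L <= d (y 0%nat) z)).
  - intros n L. apply NNPP. intros Hno. apply (Hy' n).
    exists (2 * INR L). intros a b Ha Hb.
    assert (d (y 0%nat) a < INR L).
    { apply Rnot_le_lt. intros Hc. apply Hno. exists a. split; auto. }
    assert (d (y 0%nat) b < INR L).
    { apply Rnot_le_lt. intros Hc. apply Hno. exists b. split; auto. }
    pose proof (d_tri d hd a (y 0%nat) b). rewrite (d_sym d hd a (y 0%nat)) in H1. lra.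
  - intros p. destruct (nat_gt (d (y 0%nat) p + 1)) as [L0 HL0].
    exists L0, 1. split; [lra|]. intros z L HL Hz Hc.
    apply le_INR in HL.
    pose proof (d_tri d hd (y 0%nat) p z). rewrite (d_sym d hd p z) in H. lra.
Qed.

Lemma P1_SULL {X : Type} (d : X -> X -> R) (hd : is_metric d) :
  cofinally_BQ_complete d ->
  forall (Y : Type) (rho : Y -> Y -> R), is_metric rho ->
  forall f : X -> Y, locally_lipschitz d rho f -> strongly_unif_loc_lipschitz d rho f.
Proof.
  intros HP Y rho hr f Hf. apply NNPP. intros Hn.
  assert (Hy : forall n : nat, exists y, ~ lipschitz_on d rho f (chain_comp d y (/ (INR n + 1)))).
  { intros n. apply not_all_ex_not. intros Hall. apply Hn.
    exists (/ (INR n + 1)). split; auto.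
    apply Rinv_0_lt_compat. pose proof (pos_INR n). lra. }
  destruct (choice _ Hy) as [y Hy'].
  set (y0 := y 0%nat).
  apply (merged d hd HP y (fun z L =>
     (exists a b, d z a < / (INR L + 1) /\ d z b < / (INR L + 1) /\
        (INR L + 1) * d a b < rho (f a) (f b)) \/ INR L <= rho (f y0) (f z))).
  - intros n L. apply NNPP. intros Hno. apply (Hy' n).
    assert (HL : 0 <= INR L) by apply pos_INR.
    assert (H1 : forall z, chain_comp d (y n) (/ (INR n + 1)) z ->
              forall a b, d z a < / (INR L + 1) -> d z b < / (INR L + 1) ->
              rho (f a) (f b) <= (INR L + 1) * d a b).
    { intros z Hz a b Ha Hb. apply Rnot_lt_le. intros H. apply Hno.
      exists z. split; auto. left. exists a, b. auto. }
    assert (H2 : forall z, chain_comp d (y n) (/ (INR n + 1)) z -> rho (f y0) (f z) < INR L).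
    { intros z Hz. apply Rnot_le_lt. intros H. apply Hno.
      exists z. split; auto. }
    exists ((INR L + 1) + 2 * INR L * (INR L + 1)). split; [nra|].
    intros a b Ha Hb.
    pose proof (d_nonneg d hd a b) as Hab.
    destruct (Rlt_or_le (d a b) (/ (INR L + 1))) as [Hs|Hs].
    + assert (rho (f a) (f b) <= (INR L + 1) * d a b).
      { apply (H1 a Ha); auto. rewrite (d_refl d hd). apply Rinv_0_lt_compat. lra. }
      nra.
    + pose proof (H2 a Ha). pose proof (H2 b Hb).
      pose proof (d_tri rho hr (f a) (f y0) (f b)).
      rewrite (d_sym rho hr (f a) (f y0)) in H3.
      assert (1 <= (INR L + 1) * d a b).
      { apply Rmult_le_compat_l with (r := INR L + 1) in Hs; [|lra].
        rewrite Rinv_r in Hs; lra. }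
      nra.
  - intros p. destruct (Hf p) as [r [Hr [K0 [HK0 HK]]]].
    destruct (nat_gt (2 / r + K0 + rho (f y0) (f p) + K0 * r)) as [L0 HL0].
    exists L0, (r / 2). split; [lra|]. intros z L HL Hz Hc.
    apply le_INR in HL.
    assert (Hr2 : / (INR L + 1) < r / 2).
    { assert (2 / r < INR L + 1).
      { assert (0 <= K0 * r) by nra. pose proof (d_nonneg rho hr (f y0) (f p)). lra. }
      assert (0 < 2 / r) by (unfold Rdiv; apply Rmult_lt_0_compat; [lra| apply Rinv_0_lt_compat; lra]).
      replace (r / 2) with (/ (2 / r)) by (field; lra).
      apply Rinv_lt_contravar; [nra|lra]. }
    rewrite (d_sym d hd) in Hz.
    destruct Hc as [[a [b [Ha [Hb Hlt]]]]|Hc].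
    + assert (Hpa : d p a < r) by (pose proof (d_tri d hd p z a); lra).
      assert (Hpb : d p b < r) by (pose proof (d_tri d hd p z b); lra).
      pose proof (HK a b Hpa Hpb).
      pose proof (d_nonneg d hd a b).
      assert (K0 <= INR L + 1).
      { assert (0 <= 2 / r) by (unfold Rdiv; apply Rmult_le_pos; [lra| left; apply Rinv_0_lt_compat; lra]).
        assert (0 <= K0 * r) by nra. pose proof (d_nonneg rho hr (f y0) (f p)). lra. }
      nra.
    + assert (Hpp : d p p < r) by (rewrite (d_refl d hd); lra).
      assert (Hpz : d p z < r) by lra.
      pose proof (HK p z Hpp Hpz).
      pose proof (d_tri rho hr (f y0) (f p) (f z)).
      assert (K0 * d p z <= K0 * r) by (apply Rmult_le_compat_l; lra).
      assert (0 <= 2 / r) by (unfold Rdiv; apply Rmult_le_pos; [lra| left; apply Rinv_0_lt_compat; lra]).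
      lra.
Qed.

Fixpoint sumto (f : nat -> R) (n : nat) : R :=
  match n with O => 0 | S n => sumto f n + f n end.

Lemma sumto_tail f A : (forall j, (A <= j)%nat -> f j = 0) ->
  forall B, (A <= B)%nat -> sumto f B = sumto f A.
Proof.
  intros H B HB. induction B.
  - assert (A = 0%nat) by lia. subst. reflexivity.
  - destruct (Nat.eq_dec A (S B)) as [E|E].
    + subst. reflexivity.
    + simpl. rewrite IHB by lia. rewrite (H B) by lia. lra.
Qed.

Lemma sumto_nonneg f B : (forall j, 0 <= f j) -> 0 <= sumto f B.
Proof. intros H. induction B; simpl; [lra|]. pose proof (H B). lra. Qed.

Lemma sumto_ge f B j : (forall j, 0 <= f j) -> (j < B)%nat -> f j <= sumto f B.
Proof.
  intros H Hj. induction B; [lia|]. simpl.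
  destruct (Nat.eq_dec j B) as [E|E].
  - subst. pose proof (sumto_nonneg f B H). lra.
  - pose proof (H B). assert (f j <= sumto f B) by (apply IHB; lia). lra.
Qed.

Lemma sumto_lip f g c t B : (forall j, Rabs (f j - g j) <= c j * t) ->
  Rabs (sumto f B - sumto g B) <= sumto c B * t.
Proof.
  intros H. induction B; simpl.
  - rewrite Rminus_0_r, Rabs_R0. lra.
  - replace (sumto f B + f B - (sumto g B + g B)) with ((sumto f B - sumto g B) + (f B - g B)) by ring.
    eapply Rle_trans; [apply Rabs_triang|]. pose proof (H B). nra.
Qed.

Lemma Rmax0_lip u v : Rabs (Rmax 0 u - Rmax 0 v) <= Rabs (u - v).
Proof.
  unfold Rmax. destruct (Rle_dec 0 u); destruct (Rle_dec 0 v);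
  unfold Rabs; repeat match goal with |- context [Rcase_abs ?a] => destruct (Rcase_abs a) end; lra.
Qed.

Section Bump.
Context {X : Type} (d : X -> X -> R) (hd : is_metric d) (x : nat -> X).

Definition tb (j : nat) (z : X) : R := INR j * Rmax 0 (1 - (INR j + 1) * d z (x j)).

Lemma tb_nonneg j z : 0 <= tb j z.
Proof. unfold tb. apply Rmult_le_pos. apply pos_INR. apply Rmax_l. Qed.

Lemma tb_lip j a b : Rabs (tb j a - tb j b) <= (INR j * (INR j + 1)) * d a b.
Proof.
  unfold tb. rewrite <- Rmult_minus_distr_l. rewrite Rabs_mult.
  rewrite (Rabs_right (INR j)) by (apply Rle_ge, pos_INR).
  rewrite Rmult_assoc. apply Rmult_le_compat_l; [apply pos_INR|].
  eapply Rle_trans; [apply Rmax0_lip|].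
  replace (1 - (INR j + 1) * d a (x j) - (1 - (INR j + 1) * d b (x j)))
    with ((INR j + 1) * (d b (x j) - d a (x j))) by ring.
  rewrite Rabs_mult. rewrite (Rabs_right (INR j + 1)) by (pose proof (pos_INR j); lra).
  apply Rmult_le_compat_l; [pose proof (pos_INR j); lra|].
  pose proof (d_tri d hd b a (x j)). pose proof (d_tri d hd a b (x j)).
  rewrite (d_sym d hd b a) in H.
  unfold Rabs; destruct (Rcase_abs (d b (x j) - d a (x j))); lra.
Qed.

Hypothesis hnc : forall p, ~ cluster_point d x p.

Lemma van z : exists e, 0 < e /\ exists A, forall w, d z w < e / 2 -> forall j, (A <= j)%nat -> tb j w = 0.
Proof.
  pose proof (hnc z) as H. unfold cluster_point in H.
  apply not_all_ex_not in H. destruct H as [e He].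
  apply imply_to_and in He. destruct He as [He He'].
  apply not_all_ex_not in He'. destruct He' as [m Hm].
  exists e. split; auto.
  destruct (nat_gt (2 / e)) as [J HJ].
  exists (Nat.max m J). intros w Hw j Hj.
  assert (Hd : e <= d (x j) z).
  { apply Rnot_lt_le. intros Hc. apply Hm. exists j. split; auto. lia. }
  assert (Hwj : e / 2 < d w (x j)).
  { pose proof (d_tri d hd z w (x j)). rewrite (d_sym d hd z (x j)) in H. lra. }
  assert (HJj : 2 / e < INR j + 1).
  { assert (INR J <= INR j) by (apply le_INR; lia). lra. }
  assert (1 <= (INR j + 1) * d w (x j)).
  { assert (2 / e * (e / 2) = 1) by (field; lra).
    assert (0 < 2 / e) by (unfold Rdiv; apply Rmult_lt_0_compat; [lra|apply Rinv_0_lt_compat; lra]).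
    assert (2 / e * (e / 2) <= (INR j + 1) * d w (x j)).
    { apply Rmult_le_compat; lra. }
    lra. }
  unfold tb. unfold Rmax. destruct (Rle_dec 0 _); [|lra].
  assert (1 - (INR j + 1) * d w (x j) = 0) by lra. rewrite H0. ring.
Qed.

Lemma van0 z : exists A, forall j, (A <= j)%nat -> tb j z = 0.
Proof.
  destruct (van z) as [e [He [A HA]]]. exists A. apply HA. rewrite (d_refl d hd). lra.
Qed.

Definition Mb (z : X) : nat := proj1_sig (constructive_indefinite_description _ (van0 z)).
Lemma Mb_spec z : forall j, (Mb z <= j)%nat -> tb j z = 0.
Proof. unfold Mb. destruct (constructive_indefinite_description _ _). simpl. auto. Qed.

Definition Fb (z : X) : R := sumto (fun j => tb j z) (Mb z).

Lemma Fb_eq w B : (forall j, (B <= j)%nat -> tb j w = 0) -> Fb w = sumto (fun j => tb j w) B.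
Proof.
  intros H. unfold Fb.
  rewrite <- (sumto_tail (fun j => tb j w) (Mb w) (Mb_spec w) (Nat.max B (Mb w))) by lia.
  rewrite (sumto_tail (fun j => tb j w) B H (Nat.max B (Mb w))) by lia. reflexivity.
Qed.

Lemma bump_loclip : locally_lipschitz d Rmetric Fb.
Proof.
  intros z. destruct (van z) as [e [He [A HA]]].
  exists (e / 2). split; [lra|].
  exists (sumto (fun j => INR j * (INR j + 1)) A). split.
  { apply sumto_nonneg. intros j. pose proof (pos_INR j). nra. }
  intros a b Ha Hb. unfold ball_d in Ha, Hb. unfold Rmetric.
  rewrite (Fb_eq a A (HA a Ha)). rewrite (Fb_eq b A (HA b Hb)).
  apply sumto_lip. intros j. apply tb_lip.
Qed.

Lemma bump_ge j : INR j <= Fb (x j).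
Proof.
  rewrite (Fb_eq (x j) (Nat.max (Mb (x j)) (S j))).
  - eapply Rle_trans; [|apply (sumto_ge _ _ j); [intros; apply tb_nonneg| lia]].
    unfold tb. rewrite (d_refl d hd). rewrite Rmult_0_r, Rminus_0_r.
    rewrite Rmax_right by lra. lra.
  - intros k Hk. apply Mb_spec. lia.
Qed.

End Bump.

Lemma bump {X : Type} (d : X -> X -> R) (hd : is_metric d) (x : nat -> X) :
  (forall p, ~ cluster_point d x p) ->
  exists F, locally_lipschitz d Rmetric F /\ forall j, INR j <= F (x j).
Proof.
  intros H. exists (Fb d hd x H). split.
  - apply bump_loclip.
  - apply bump_ge.
Qed.

Lemma quot_lip u v u' v' h t : 0 <= u -> 0 <= v -> 0 <= u' -> 0 <= v' -> 0 < h ->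
  h <= u + v -> h <= u' + v' -> Rabs (u - u') <= t -> Rabs (v - v') <= t ->
  Rabs (u / (u + v) - u' / (u' + v')) <= t / h.
Proof.
  intros Hu Hv Hu' Hv' Hh HP HQ H1 H2.
  replace (u / (u + v) - u' / (u' + v')) with ((u * (v' - v) + v * (u - u')) / ((u + v) * (u' + v')))
    by (field; split; apply Rgt_not_eq; lra).
  set (P := u + v) in *. set (Q := u' + v') in *.
  assert (HPp : 0 < P) by lra. assert (HQp : 0 < Q) by lra.
  assert (Hn : Rabs (u * (v' - v) + v * (u - u')) <= P * t).
  { eapply Rle_trans; [apply Rabs_triang|]. rewrite !Rabs_mult.
    rewrite (Rabs_right u) by lra. rewrite (Rabs_right v) by lra.
    rewrite Rabs_minus_sym in H2. unfold P. nra. }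
  unfold Rdiv. rewrite Rabs_mult. rewrite Rabs_inv.
  rewrite (Rabs_right (P * Q)) by nra.
  assert (0 <= t) by (pose proof (Rabs_pos (u - u')); lra).
  apply Rle_trans with (P * t * / (P * Q)).
  { apply Rmult_le_compat_r; [left; apply Rinv_0_lt_compat; nra | auto]. }
  replace (P * t * / (P * Q)) with (t * / Q) by (field; lra).
  apply Rmult_le_compat_l; auto.
  apply Rinv_le_contravar; lra.
Qed.

Section Dist.
Context {X : Type} (d : X -> X -> R) (hd : is_metric d).

Definition Eset (z : X) (A : X -> Prop) (u : R) : Prop := - u = 1 \/ exists a, A a /\ - u = d z a.

Lemma Eset_bnd z A : bound (Eset z A).
Proof.
  exists 0. intros u [H|[a [_ H]]]; [lra|]. pose proof (d_nonneg d hd z a). lra.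
Qed.

Lemma Eset_ne z A : exists u, Eset z A u.
Proof. exists (-1). left. lra. Qed.

Definition Dist (z : X) (A : X -> Prop) : R :=
  - proj1_sig (completeness (Eset z A) (Eset_bnd z A) (Eset_ne z A)).

Lemma Dist_lub z A : is_lub (Eset z A) (- Dist z A).
Proof. unfold Dist. destruct (completeness _ _ _) as [m Hm]. simpl. rewrite Ropp_involutive. auto. Qed.

Lemma Dist_range z A : 0 <= Dist z A <= 1.
Proof.
  destruct (Dist_lub z A) as [Hub Hl]. split.
  - assert (- Dist z A <= 0).
    { apply Hl. intros u [H|[a [_ H]]]; [lra|]. pose proof (d_nonneg d hd z a). lra. }
    lra.
  - assert (-1 <= - Dist z A) by (apply Hub; left; lra). lra.
Qed.

Lemma Dist_le_pt z A a : A a -> Dist z A <= d z a.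
Proof.
  intros Ha. destruct (Dist_lub z A) as [Hub _].
  assert (- d z a <= - Dist z A) by (apply Hub; right; exists a; split; auto; lra). lra.
Qed.

Lemma Dist_glb z A l : (forall a, A a -> l <= d z a) -> l <= 1 -> l <= Dist z A.
Proof.
  intros H H1. destruct (Dist_lub z A) as [_ Hl].
  assert (- Dist z A <= - l).
  { apply Hl. intros u [Hu|[a [Ha Hu]]]; [lra|]. pose proof (H a Ha). lra. }
  lra.
Qed.

Lemma Dist_small z A eta : Dist z A < eta -> eta <= 1 -> exists a, A a /\ d z a < eta.
Proof.
  intros H H1. apply NNPP. intros Hn.
  assert (eta <= Dist z A).
  { apply Dist_glb; auto. intros a Ha. apply Rnot_lt_le. intros Hc. apply Hn. exists a. auto. }
  lra.
Qed.

Lemma Dist_lip z w A : Rabs (Dist z A - Dist w A) <= d z w.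
Proof.
  assert (Hgen : forall z w, Dist w A <= Dist z A + d z w).
  { intros z0 w0. assert (Dist w0 A - d z0 w0 <= Dist z0 A); [|lra].
    apply Dist_glb.
    - intros a Ha. pose proof (Dist_le_pt w0 A a Ha). pose proof (d_tri d hd w0 z0 a).
      rewrite (d_sym d hd w0 z0) in H0. lra.
    - pose proof (Dist_range w0 A). pose proof (d_nonneg d hd z0 w0). lra. }
  pose proof (Hgen z w). pose proof (Hgen w z). rewrite (d_sym d hd w z) in H0.
  unfold Rabs. destruct (Rcase_abs _); lra.
Qed.

Lemma Dist_in z A : A z -> Dist z A = 0.
Proof. intros H. pose proof (Dist_le_pt z A z H). rewrite (d_refl d hd) in H0. pose proof (Dist_range z A). lra. Qed.

End Dist.

Section Approx.
Context {X : Type} (d : X -> X -> R) (hd : is_metric d) (f : X -> R)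
  (hf : continuous_d d f) (e : R) (he : 0 < e).

Definition SA (j : Z) (w : X) : Prop := f w <= IZR j * e.
Definition SB (j : Z) (w : X) : Prop := (IZR j + 1) * e <= f w.

Lemma near_set z (S : X -> Prop) : Dist d hd z S = 0 ->
  forall eta, 0 < eta -> exists a, S a /\ d z a < eta.
Proof.
  intros H eta Heta. destruct (Dist_small d hd z S (Rmin eta 1)) as [a [Ha Hd]].
  - rewrite H. apply Rmin_glb_lt; lra.
  - apply Rmin_r.
  - exists a. split; auto. pose proof (Rmin_l eta 1). lra.
Qed.

Lemma Dpos j z : 0 < Dist d hd z (SA j) + Dist d hd z (SB j).
Proof.
  pose proof (Dist_range d hd z (SA j)). pose proof (Dist_range d hd z (SB j)).
  destruct (Rle_lt_or_eq_dec 0 (Dist d hd z (SA j))) as [H1|H1]; [lra| lra|].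
  destruct (Rle_lt_or_eq_dec 0 (Dist d hd z (SB j))) as [H2|H2]; [lra| lra|].
  exfalso.
  assert (fa : f z <= IZR j * e).
  { apply Rnot_lt_le. intros Hc.
    destruct (hf z (f z - IZR j * e)) as [dl [Hdl Hc2]]; [lra|].
    destruct (near_set z (SA j) (eq_sym H1) dl Hdl) as [a [Ha Hda]].
    pose proof (Hc2 a Hda). unfold SA in Ha. unfold Rabs in H3. destruct (Rcase_abs _); lra. }
  assert (fb : (IZR j + 1) * e <= f z).
  { apply Rnot_lt_le. intros Hc.
    destruct (hf z ((IZR j + 1) * e - f z)) as [dl [Hdl Hc2]]; [lra|].
    destruct (near_set z (SB j) (eq_sym H2) dl Hdl) as [a [Ha Hda]].
    pose proof (Hc2 a Hda). unfold SB in Ha. unfold Rabs in H3. destruct (Rcase_abs _); lra. }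
  lra.
Qed.

Definition psi (j : Z) (z : X) : R :=
  Dist d hd z (SA j) / (Dist d hd z (SA j) + Dist d hd z (SB j)).

Lemma psi_A j w : f w <= IZR j * e -> psi j w = 0.
Proof.
  intros H. unfold psi. rewrite (Dist_in d hd w (SA j)) by exact H.
  unfold Rdiv. ring.
Qed.

Lemma psi_B j w : (IZR j + 1) * e <= f w -> psi j w = 1.
Proof.
  intros H. pose proof (Dpos j w). unfold psi in *.
  rewrite (Dist_in d hd w (SB j)) in * by exact H.
  rewrite Rplus_0_r in *. field. lra.
Qed.

Lemma psi_range j w : 0 <= psi j w <= 1.
Proof.
  pose proof (Dpos j w). pose proof (Dist_range d hd w (SA j)). pose proof (Dist_range d hd w (SB j)).
  unfold psi. split.
  - apply Rmult_le_pos; [lra|]. left. apply Rinv_0_lt_compat. lra.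
  - apply Rmult_le_reg_r with (Dist d hd w (SA j) + Dist d hd w (SB j)); [lra|].
    unfold Rdiv. rewrite Rmult_assoc, Rinv_l by lra. lra.
Qed.

Lemma psi_loclip j z : exists r, 0 < r /\ exists K, 0 <= K /\
  forall a b, d z a < r -> d z b < r -> Rabs (psi j a - psi j b) <= K * d a b.
Proof.
  set (s := Dist d hd z (SA j) + Dist d hd z (SB j)).
  assert (Hs : 0 < s) by apply Dpos.
  exists (s / 4). split; [lra|]. exists (/ (s / 2)). split.
  { left. apply Rinv_0_lt_compat. lra. }
  assert (Hlow : forall a, d z a < s / 4 -> s / 2 <= Dist d hd a (SA j) + Dist d hd a (SB j)).
  { intros a Ha. pose proof (Dist_lip d hd z a (SA j)). pose proof (Dist_lip d hd z a (SB j)).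
    unfold s in *. unfold Rabs in H, H0. destruct (Rcase_abs _) in H; destruct (Rcase_abs _) in H0; lra. }
  intros a b Ha Hb. unfold psi.
  replace (/ (s / 2) * d a b) with (d a b / (s / 2)) by (unfold Rdiv; ring).
  apply quot_lip.
  - apply Dist_range.
  - apply Dist_range.
  - apply Dist_range.
  - apply Dist_range.
  - lra.
  - apply Hlow; auto.
  - apply Hlow; auto.
  - apply Dist_lip.
  - apply Dist_lip.
Qed.

Definition kz (z : X) : Z := (up (f z / e) - 1)%Z.

Lemma kz_spec z : IZR (kz z) * e <= f z < (IZR (kz z) + 1) * e.
Proof.
  destruct (archimed (f z / e)) as [H1 H2]. unfold kz. rewrite minus_IZR.
  assert (Hx : f z = (f z / e) * e) by (field; lra).
  split.
  - rewrite Hx at 2. apply Rmult_le_compat_r; lra.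
  - rewrite Hx at 1. apply Rmult_lt_compat_r; lra.
Qed.

Definition gapp (z : X) : R := e * (IZR (kz z) + psi (kz z) z).

Lemma gapp_close z : Rabs (f z - gapp z) <= e.
Proof.
  pose proof (kz_spec z). pose proof (psi_range (kz z) z). unfold gapp.
  unfold Rabs. destruct (Rcase_abs _); nra.
Qed.

Lemma gapp_rep z w : Rabs (f w - f z) < e ->
  gapp w = e * (IZR (kz z) - 1 + psi (kz z - 1) w + psi (kz z) w + psi (kz z + 1) w).
Proof.
  intros H. pose proof (kz_spec z) as Kz. pose proof (kz_spec w) as Kw.
  assert (Hfw : f z - e < f w < f z + e) by (unfold Rabs in H; destruct (Rcase_abs _) in H; lra).
  assert (U : (kz w < kz z + 2)%Z).
  { apply lt_IZR. rewrite plus_IZR. apply Rmult_lt_reg_r with e; [lra|]. lra. }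
  assert (Lo : (kz z - 2 < kz w)%Z).
  { apply lt_IZR. rewrite minus_IZR. apply Rmult_lt_reg_r with e; [lra|]. lra. }
  unfold gapp.
  assert (C : (kz w = kz z - 1 \/ kz w = kz z \/ kz w = kz z + 1)%Z) by lia.
  destruct C as [C|[C|C]]; rewrite C in *.
  - rewrite (psi_A (kz z) w) by (rewrite minus_IZR in Kw; lra).
    rewrite (psi_A (kz z + 1) w) by (rewrite minus_IZR in Kw; rewrite plus_IZR; lra).
    rewrite minus_IZR. ring.
  - rewrite (psi_B (kz z - 1) w) by (rewrite minus_IZR; lra).
    rewrite (psi_A (kz z + 1) w) by (rewrite plus_IZR; lra).
    ring.
  - rewrite (psi_B (kz z - 1) w) by (rewrite plus_IZR in Kw; rewrite minus_IZR; lra).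
    rewrite (psi_B (kz z) w) by (rewrite plus_IZR in Kw; lra).
    rewrite plus_IZR. ring.
Qed.

Lemma gapp_loclip : locally_lipschitz d Rmetric gapp.
Proof.
  intros z.
  destruct (hf z e he) as [d0 [Hd0 Hc]].
  destruct (psi_loclip (kz z - 1) z) as [r1 [Hr1 [K1 [HK1 P1]]]].
  destruct (psi_loclip (kz z) z) as [r2 [Hr2 [K2 [HK2 P2]]]].
  destruct (psi_loclip (kz z + 1) z) as [r3 [Hr3 [K3 [HK3 P3]]]].
  set (r := Rmin d0 (Rmin r1 (Rmin r2 r3))).
  assert (Hr : 0 < r) by (unfold r; repeat apply Rmin_pos; auto).
  assert (Hrd : r <= d0) by apply Rmin_l.
  assert (Hr1' : r <= r1) by (unfold r; eapply Rle_trans; [apply Rmin_r| apply Rmin_l]).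
  assert (Hr2' : r <= r2) by (unfold r; eapply Rle_trans; [apply Rmin_r|]; eapply Rle_trans; [apply Rmin_r| apply Rmin_l]).
  assert (Hr3' : r <= r3) by (unfold r; eapply Rle_trans; [apply Rmin_r|]; eapply Rle_trans; [apply Rmin_r| apply Rmin_r]).
  exists r. split; auto. exists (e * (K1 + K2 + K3)). split; [nra|].
  intros a b Ha Hb. unfold ball_d in Ha, Hb. unfold Rmetric.
  rewrite (gapp_rep z a) by (apply Hc; lra).
  rewrite (gapp_rep z b) by (apply Hc; lra).
  pose proof (P1 a b ltac:(lra) ltac:(lra)).
  pose proof (P2 a b ltac:(lra) ltac:(lra)).
  pose proof (P3 a b ltac:(lra) ltac:(lra)).
  replace (e * (IZR (kz z) - 1 + psi (kz z - 1) a + psi (kz z) a + psi (kz z + 1) a) -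
           e * (IZR (kz z) - 1 + psi (kz z - 1) b + psi (kz z) b + psi (kz z + 1) b))
    with (e * ((psi (kz z - 1) a - psi (kz z - 1) b) + (psi (kz z) a - psi (kz z) b)
               + (psi (kz z + 1) a - psi (kz z + 1) b))) by ring.
  rewrite Rabs_mult. rewrite (Rabs_right e) by lra.
  rewrite Rmult_assoc. apply Rmult_le_compat_l; [lra|].
  eapply Rle_trans; [apply Rabs_triang|].
  eapply Rle_trans; [apply Rplus_le_compat_r; apply Rabs_triang|].
  lra.
Qed.

End Approx.

Lemma approx {X : Type} (d : X -> X -> R) (hd : is_metric d) (f : X -> R) :
  continuous_d d f -> forall eps, 0 < eps ->
  exists g, locally_lipschitz d Rmetric g /\ forall x, Rabs (f x - g x) < eps.
Proof.
  intros hf eps Heps. exists (gapp d hd f (eps / 2)). split.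
  - apply gapp_loclip; auto. lra.
  - intros x. pose proof (gapp_close d hd f hf (eps / 2) ltac:(lra) x). lra.
Qed.

Lemma Rmetric_metric : is_metric Rmetric.
Proof.
  unfold is_metric, Rmetric. split; [|split; [|split]].
  - intros; apply Rabs_pos.
  - intros a b. split.
    + intros H. destruct (Req_dec (a - b) 0) as [E|E]; [lra|].
      exfalso. apply (Rabs_no_R0 _ E H).
    + intros H. subst. rewrite Rminus_diag, Rabs_R0. reflexivity.
  - intros. apply Rabs_minus_sym.
  - intros a b c. replace (a - c) with ((a - b) + (b - c)) by ring. apply Rabs_triang.
Qed.

Lemma core {X : Type} (d : X -> X -> R) (hd : is_metric d) :
  strongly_unif_loc_bounded d -> forall x, cofinally_BQC_seq d x ->
  forall G, strongly_unif_loc_lipschitz d Rmetric G ->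
  forall F : X -> R, (forall j, INR j <= F (x j)) -> (forall z, F z <= G z + 1) -> False.
Proof.
  intros [d1 [Hd1 Hb]] x Hx G [d2 [Hd2 HL]] F HF HFG.
  set (eta := Rmin d1 d2).
  assert (Heta : 0 < eta) by (apply Rmin_pos; auto).
  destruct (Hx eta Heta) as [N [Ninf Nch]].
  destruct (Ninf 0%nat) as [j0 [_ Hj0]].
  destruct (Hb (x j0)) as [M HM]. destruct (HL (x j0)) as [K [HK HKl]].
  destruct (nat_gt (G (x j0) + K * M + 1)) as [L HL0].
  destruct (Ninf L) as [j [Hj HjN]].
  assert (Hc : eps_chain d eta (x j0) (x j)) by (apply Nch; auto).
  assert (C1 : chain_comp d (x j0) d1 (x j)) by (apply (chain_mono d) with eta; auto; apply Rmin_l).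
  assert (C2 : chain_comp d (x j0) d2 (x j)) by (apply (chain_mono d) with eta; auto; apply Rmin_r).
  assert (R1 : chain_comp d (x j0) d1 (x j0)) by apply chain_refl.
  assert (R2 : chain_comp d (x j0) d2 (x j0)) by apply chain_refl.
  pose proof (HM _ _ R1 C1). pose proof (HKl _ _ R2 C2).
  unfold Rmetric in H0.
  pose proof (HF j). pose proof (HFG (x j)). apply le_INR in Hj.
  assert (K * d (x j0) (x j) <= K * M) by (apply Rmult_le_compat_l; auto).
  unfold Rabs in H0. destruct (Rcase_abs _) in H0; lra.
Qed.

Lemma P3_P1 {X : Type} (d : X -> X -> R) (hd : is_metric d) :
  strongly_unif_loc_bounded d ->
  (forall f : X -> R, locally_lipschitz d Rmetric f -> strongly_unif_loc_lipschitz d Rmetric f) ->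
  cofinally_BQ_complete d.
Proof.
  intros Hb H x Hx. apply NNPP. intros Hn.
  assert (hnc : forall p, ~ cluster_point d x p) by (intros p Hp; apply Hn; exists p; auto).
  destruct (bump d hd x hnc) as [F [HF HFge]].
  apply (core d hd Hb x Hx F (H F HF) F HFge). intros; lra.
Qed.

Lemma loclip_cont {X : Type} (d : X -> X -> R) (hd : is_metric d) (F : X -> R) :
  locally_lipschitz d Rmetric F -> continuous_d d F.
Proof.
  intros H x eps Heps. destruct (H x) as [r [Hr [K [HK HL]]]].
  exists (Rmin r (eps / (K + 1))). split.
  { apply Rmin_pos; auto. unfold Rdiv. apply Rmult_lt_0_compat; auto. apply Rinv_0_lt_compat; lra. }
  intros y Hy.
  assert (Hy1 : d x y < r) by (pose proof (Rmin_l r (eps / (K + 1))); lra).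
  assert (Hy2 : d x y < eps / (K + 1)) by (pose proof (Rmin_r r (eps / (K + 1))); lra).
  assert (Hxx : ball_d d x r x) by (unfold ball_d; rewrite (d_refl d hd); auto).
  pose proof (HL y x Hy1 Hxx). unfold Rmetric in H0. rewrite (d_sym d hd y x) in H0.
  assert (K * d x y <= K * (eps / (K + 1))) by (apply Rmult_le_compat_l; lra).
  assert (K * (eps / (K + 1)) < eps).
  { replace (K * (eps / (K + 1))) with (eps - eps / (K + 1)) by (field; lra).
    assert (0 < eps / (K + 1)) by (unfold Rdiv; apply Rmult_lt_0_compat; auto; apply Rinv_0_lt_compat; lra).
    lra. }
  lra.
Qed.

Lemma P4_P1 {X : Type} (d : X -> X -> R) (hd : is_metric d) :
  strongly_unif_loc_bounded d -> SULL_uniformly_dense d -> cofinally_BQ_complete d.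
Proof.
  intros Hb H x Hx. apply NNPP. intros Hn.
  assert (hnc : forall p, ~ cluster_point d x p) by (intros p Hp; apply Hn; exists p; auto).
  destruct (bump d hd x hnc) as [F [HF HFge]].
  destruct (H F (loclip_cont d hd F HF) 1 ltac:(lra)) as [g [Hg Hfg]].
  apply (core d hd Hb x Hx g Hg F HFge). intros z. pose proof (Hfg z).
  unfold Rabs in H0. destruct (Rcase_abs _) in H0; lra.
Qed.

Theorem mainTheorem1 (X : Type) (d : X -> X -> R) (hd : is_metric d) :
  let P1 := cofinally_BQ_complete d in
  let P2 := strongly_unif_loc_bounded d /\
            (forall (Y : Type) (rho : Y -> Y -> R), is_metric rho ->
               forall f : X -> Y, locally_lipschitz d rho f ->
                 strongly_unif_loc_lipschitz d rho f) in
  let P3 := strongly_unif_loc_bounded d /\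
            (forall f : X -> R, locally_lipschitz d Rmetric f ->
               strongly_unif_loc_lipschitz d Rmetric f) in
  let P4 := strongly_unif_loc_bounded d /\ SULL_uniformly_dense d in
  (P1 <-> P2) /\ (P1 <-> P3) /\ (P1 <-> P4).
Proof.
  intros P1 P2 P3 P4. unfold P1, P2, P3, P4.
  split; [|split]; split.
  - intros H. split; [apply (P1_SULB d hd H)| apply (P1_SULL d hd H)].
  - intros [Hb H]. apply (P3_P1 d hd Hb). intros f Hf. apply H; auto. apply Rmetric_metric.
  - intros H. split; [apply (P1_SULB d hd H)|]. intros f Hf. apply (P1_SULL d hd H); auto. apply Rmetric_metric.
  - intros [Hb H]. apply (P3_P1 d hd Hb H).
  - intros H. split; [apply (P1_SULB d hd H)|].
    intros f Hf eps Heps. destruct (approx d hd f Hf eps Heps) as [g [Hg Hfg]].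
    exists g. split; auto. apply (P1_SULL d hd H); auto. apply Rmetric_metric.
  - intros [Hb H]. apply (P4_P1 d hd Hb H).
Qed.
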